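(* Let $A$ be a physical system of dimension $m$ with Hamiltonian $H^A$ and an orthonormal energy eigenbasis $\{|x\rangle\}_{x=1}^m$. Let $\sigma$ be an arbitrary density matrix on $A$ and $p_x\coloneqq\langle x|\sigma|x\rangle$. Then the pure state $|\psi\rangle\coloneqq\sum_{x=1}^m\sqrt{p_x}|x\rangle$ can be converted to $\sigma$ by a time-translation covariant channel, i.e. there exists a time-translation covariant channel $\mathcal{E}:A\to A$ with $\mathcal{E}(|\psi\rangle\langle\psi|)=\sigma$.
   Context: A channel (CPTP map) $\mathcal{E}:A\to A$ is time-translation covariant if $\mathcal{E}(e^{-iH^At}\rho e^{iH^At})=e^{-iH^At}\mathcal{E}(\rho)e^{iH^At}$ for all $t\in\mathbb{R}$ and all states $\rho$ on $A$. *)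

(* Defs.v *)
From HB Require Import structures.
From mathcomp Require Import all_boot all_order all_algebra.
From mathcomp Require Import reals trigo.
From mathcomp Require Import complex mxtens.

Set Implicit Arguments.
Unset Strict Implicit.
Unset Printing Implicit Defensive.

Import Order.TTheory GRing.Theory Num.Theory.
Local Open Scope ring_scope.
Local Open Scope complex_scope.

(* Throughout, a system A of dimension m is described in coordinates w.r.t.
   its orthonormal energy eigenbasis {|x>}, x : 'I_m. *)

Section QDefs.
Variable R : realType.
Local Notation C := (R[i]).

Definition adj {p q : nat} (A : 'M[C]_(p, q)) : 'M[C]_(q, p) :=
  (map_mx Num.conj A)^T.

Definition psd {n : nat} (A : 'M[C]_n) : Prop :=
  forall v : 'cV[C]_n, 0 <= (adj v *m A *m v) 0 0.

Definition density {n : nat} (rho : 'M[C]_n) : Prop :=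
  psd rho /\ \tr rho = 1.

(* (id_k (x) E) acting on X in M_k (x) M_n, with the tensor index
   convention of mxtens (the one used by A *t B). *)
Definition ampliate (k : nat) {n : nat} (E : 'M[C]_n -> 'M[C]_n)
    (X : 'M[C]_(k * n)) : 'M[C]_(k * n) :=
  \matrix_(i, j)
    E (\matrix_(a, b) X (mxtens_index ((mxtens_unindex i).1, a))
                         (mxtens_index ((mxtens_unindex j).1, b)))
      (mxtens_unindex i).2 (mxtens_unindex j).2.

Definition completely_positive {n : nat} (E : 'M[C]_n -> 'M[C]_n) : Prop :=
  forall (k : nat) (X : 'M[C]_(k * n)), psd X -> psd (@ampliate k n E X).

Definition trace_preserving {n : nat} (E : 'M[C]_n -> 'M[C]_n) : Prop :=
  forall X : 'M[C]_n, \tr (E X) = \tr X.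

Definition channel {n : nat} (E : 'M[C]_n -> 'M[C]_n) : Prop :=
  linear E /\ completely_positive E /\ trace_preserving E.

Definition expmi (theta : R) : C := (cos theta)%:C - 'i * (sin theta)%:C.

Definition hamiltonian {n : nat} (En : 'I_n -> R) : 'M[C]_n :=
  diag_mx (\row_x (En x)%:C).

Definition evol {n : nat} (En : 'I_n -> R) (t : R) : 'M[C]_n :=
  diag_mx (\row_x expmi (En x * t)).

Definition tt_covariant {n : nat} (En : 'I_n -> R)
    (E : 'M[C]_n -> 'M[C]_n) : Prop :=
  forall (t : R) (rho : 'M[C]_n), density rho ->
    E (evol En t *m rho *m adj (evol En t))
    = evol En t *m E rho *m adj (evol En t).

Definition ketbra {n : nat} (psi : 'cV[C]_n) : 'M[C]_n := psi *m adj psi.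

End QDefs.

(* Main.v *)
Require Import Defs.
From HB Require Import structures.
From mathcomp Require Import all_boot all_order all_algebra.
From mathcomp Require Import reals trigo.
From mathcomp Require Import complex mxtens.
From mathcomp Require Import spectral sesquilinear.
From mathcomp Require Import ring.
Set Implicit Arguments.
Unset Strict Implicit.
Import Order.TTheory GRing.Theory Num.Theory.
Local Open Scope ring_scope.

Lemma bilE (R : realType) (n : nat) (A : 'M[R[i]]_n) (u v : 'cV[R[i]]_n) :
  (adj u *m A *m v) 0 0 = \sum_i \sum_j (u i 0)^* * A i j * v j 0.
Proof.
rewrite exchange_big !mxE; apply: eq_bigr => j _; rewrite !mxE mulr_suml.
by apply: eq_bigr => i _; rewrite !mxE.
Qed.

Lemma adjM (R : realType) (p q r : nat) (A : 'M[R[i]]_(p, q)) (B : 'M[R[i]]_(q, r)) :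
  adj (A *m B) = adj B *m adj A.
Proof. by rewrite /adj map_mxM trmx_mul. Qed.

Lemma adjD (R : realType) (p q : nat) (A B : 'M[R[i]]_(p, q)) :
  adj (A + B) = adj A + adj B.
Proof. by apply/matrixP=> i j; rewrite !mxE rmorphD. Qed.

Lemma adjZ (R : realType) (p q : nat) (c : R[i]) (A : 'M[R[i]]_(p, q)) :
  adj (c *: A) = c^* *: adj A.
Proof. by apply/matrixP=> i j; rewrite !mxE rmorphM. Qed.

Lemma adjK (R : realType) (p q : nat) (A : 'M[R[i]]_(p, q)) : adj (adj A) = A.
Proof. by apply/matrixP=> i j; rewrite !mxE conjCK. Qed.

Lemma adj_tC (R : realType) (p q : nat) (A : 'M[R[i]]_(p, q)) :
  adj A = (A ^t* )%sesqui.
Proof. by apply/matrixP=> i j; rewrite !mxE. Qed.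

Lemma quad_delta (R : realType) (n : nat) (S : 'M[R[i]]_n) (a b : 'I_n) :
  (adj (delta_mx a (0:'I_1) : 'cV[R[i]]_n) *m S *m delta_mx b (0:'I_1)) 0 0 = S a b.
Proof.

have -> : adj (delta_mx a (0:'I_1) : 'cV[R[i]]_n) = delta_mx 0 a.
  apply/matrixP=> i j; rewrite !mxE.
  by case: (j == a); case: (i == 0); rewrite /= ?conjC1 ?conjC0.
by rewrite -rowE -colE !mxE.
Qed.

Lemma entryD (T : ringType) p q (A B : 'M[T]_(p, q)) i j : (A + B) i j = A i j + B i j.
Proof. by rewrite mxE. Qed.
Lemma entryZ (T : ringType) p q (c : T) (A : 'M[T]_(p, q)) i j : (c *: A) i j = c * A i j.
Proof. by rewrite mxE. Qed.

Lemma psd_herm (R : realType) (n : nat) (S : 'M[R[i]]_n) :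
  psd S -> forall a b, S a b = (S b a)^*.
Proof.
move=> hS a b.
pose ea : 'cV[R[i]]_n := delta_mx a (0:'I_1).
pose eb : 'cV[R[i]]_n := delta_mx b (0:'I_1).
have qE : forall c, (adj (ea + c *: eb) *m S *m (ea + c *: eb)) 0 0 =
   S a a + c * S a b + c^* * S b a + c^* * c * S b b.
  move=> c; rewrite adjD adjZ !mulmxDl !mulmxDr -!scalemxAr -!scalemxAl -?scalemxAr.
  rewrite !entryD !entryZ /ea /eb !quad_delta.
  by rewrite -mulrA; ring.
have hr : forall c, (S a a + c * S a b + c^* * S b a + c^* * c * S b b)^* =
     S a a + c * S a b + c^* * S b a + c^* * c * S b b.
  by move=> c; rewrite -qE; apply: geC0_conj; apply: hS.
have h0 := hr 0; have h1 := hr 1; have h2 := hr 'i.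
rewrite conjC0 !mul0r !addr0 in h0.
rewrite conjC1 !mul1r in h1.
rewrite conjCi in h2.
have hb : (S b b)^* = S b b.
  by have := hS eb; rewrite /eb quad_delta => /geC0_conj.
rewrite !rmorphD /= h0 hb in h1.
rewrite !rmorphD !rmorphM /= !rmorphN /= conjCi h0 hb opprK in h2.
have e1 : (S a b)^* + (S b a)^* = S a b + S b a.
  by apply: (addIr (S b b)); apply: (addrI (S a a)); rewrite !addrA.
have e2 : (S a b)^* - (S b a)^* = - S a b + S b a.
  move: h2; set x := S a b; set y := S b a; set u := S a a; set w := S b b.
  move=> h.
  have k : 'i * ((x^* - y^*) - (- x + y)) = 0.
    have -> : 'i * ((x^* - y^*) - (- x + y)) =
      - ((u + - 'i * x^* + 'i * y^* + 'i * - 'i * w) -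
         (u + 'i * x + - 'i * y + - 'i * 'i * w)) by ring.
    by rewrite h subrr oppr0.
  move/eqP: k; rewrite mulf_eq0 (negbTE (neq0Ci _)) /= subr_eq0.
  by move/eqP.
suff : (S a b - (S b a)^*) *+ 2 == 0.
  by rewrite mulrn_eq0 /= subr_eq0 => /eqP.
apply/eqP.
have -> : (S a b - (S b a)^*) *+ 2 =
  ((S a b + S b a) - ((S a b)^* + (S b a)^* )) + (((S a b)^* - (S b a)^*) - (- S a b + S b a)).
  ring.
by rewrite e1 e2 !subrr addr0.
Qed.

Lemma psd_decomp (R : realType) (n : nat) (S : 'M[R[i]]_n) :
  psd S -> exists W : 'M[R[i]]_n, S = adj W *m W.
Proof.
move=> hS.
have hh : S \is hermsymmx.
  apply/is_hermitianmxP; rewrite expr0 scale1r; apply/matrixP => a b.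
  rewrite !mxE; exact: psd_herm.
have /orthomx_spectralP hSd := hermitian_normalmx hh.
have Pu : spectralmx S \is unitarymx := spectral_unitarymx S.
move: hSd; set P := spectralmx S; set d := spectral_diag S => hSd.
rewrite invmx_unitary // in hSd.
have PP : P *m (P ^t* )%sesqui = 1%:M by apply/unitarymxP.
have PSP : P *m S *m (P ^t* )%sesqui = diag_mx d.
  by rewrite hSd !mulmxA PP mul1mx -mulmxA PP mulmx1.
have hd : forall k, 0 <= d 0 k.
  move=> k; pose e : 'cV[R[i]]_n := delta_mx k 0.
  have := hS ((P ^t* )%sesqui *m e).
  rewrite adjM (adj_tC (P ^t* )%sesqui) trmxCK.
  have -> : adj e *m P *m S *m ((P ^t* )%sesqui *m e)
     = adj e *m (P *m S *m (P ^t* )%sesqui) *m e.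
    by rewrite !mulmxA.
  rewrite PSP /e quad_delta mxE eqxx mulr1n.
  done.
pose Dg : 'M[R[i]]_n := diag_mx (\row_k sqrtC (d 0 k)).
exists (Dg *m P).
have DD : adj Dg *m Dg = diag_mx d.
  apply/matrixP=> a b; rewrite mxE (bigD1 a) //= big1 ?addr0; last first.
    by move=> j ne; rewrite !mxE (negbTE ne) mulr0n conjC0 mul0r.
  rewrite !mxE eqxx mulr1n; case: (eqVneq a b) => [->|ne].
    rewrite !mulr1n geC0_conj ?sqrtC_ge0 ?hd //.
    by rewrite -expr2 sqrtCK.
  by rewrite !mulr0n mulr0.
rewrite -adj_tC in hSd.
by rewrite adjM !mulmxA -(mulmxA (adj P)) DD.
Qed.

Definition had (R : realType) (n : nat) (C X : 'M[R[i]]_n) : 'M[R[i]]_n :=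
  \matrix_(x, y) (C x y * X x y).

Lemma had_linear (R : realType) (n : nat) (C : 'M[R[i]]_n) : linear (had C).
Proof. by move=> a X Y; apply/matrixP => x y; rewrite !mxE; ring. Qed.

Lemma had_tp (R : realType) (n : nat) (C : 'M[R[i]]_n) :
  (forall x, C x x = 1) -> trace_preserving (had C).
Proof.
move=> hC X; rewrite /mxtrace; apply: eq_bigr => x _.
by rewrite mxE hC mul1r.
Qed.

Lemma ampliate_had (R : realType) (n k : nat) (C : 'M[R[i]]_n) (X : 'M[R[i]]_(k * n)) i j :
  ampliate (had C) X i j = C (mxtens_unindex i).2 (mxtens_unindex j).2 * X i j.
Proof.
rewrite /ampliate !mxE.
have pe : forall (u : 'I_k * 'I_n), (u.1, u.2) = u by case.
by rewrite !pe !mxtens_unindexK.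
Qed.

Lemma had_cp (R : realType) (n q : nat) (C : 'M[R[i]]_n) (G : 'M[R[i]]_(q, n)) :
  (forall x y, C x y = \sum_r (G r x)^* * G r y) -> completely_positive (had C).
Proof.
move=> hC k X hX v.
pose u (r : 'I_q) : 'cV[R[i]]_(k * n) := \col_i (G r (mxtens_unindex i).2 * v i 0).
have -> : (adj v *m ampliate (had C) X *m v) 0 0 =
          \sum_r (adj (u r) *m X *m u r) 0 0.
  rewrite bilE.
  under eq_bigr => i _ do under eq_bigr => j _ do
    rewrite ampliate_had hC mulr_suml mulr_sumr mulr_suml.
  under eq_bigr => i _ do rewrite exchange_big.
  rewrite exchange_big; apply: eq_bigr => r _.
  rewrite bilE; apply: eq_bigr => i _; apply: eq_bigr => j _.
  rewrite !mxE; move: (v i 0) (v j 0) (X i j) (G r (mxtens_unindex i).2) (G r (mxtens_unindex j).2) => a b c g h.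
  rewrite rmorphM /= !mulrA (mulrC a^* g^*) -(mulrA (g^* * a^*) h c) (mulrC h c) !mulrA //.
exact: (sumr_ge0 _ (fun r _ => hX (u r))).
Qed.

Lemma adj_diag (R : realType) (n : nat) (d : 'rV[R[i]]_n) :
  adj (diag_mx d) = diag_mx (map_mx Num.conj d).
Proof.
apply/matrixP => x y; rewrite !mxE; case: (eqVneq x y) => [->|ne]; first by rewrite !mulr1n.
by rewrite !mulr0n conjC0.
Qed.

Lemma diag_conjE (R : realType) (n : nat) (d : 'rV[R[i]]_n) (A : 'M[R[i]]_n) x y :
  (diag_mx d *m A *m adj (diag_mx d)) x y = d 0 x * A x y * (d 0 y)^*.
Proof. by rewrite adj_diag mul_diag_mx mul_mx_diag !mxE. Qed.

Lemma had_cov (R : realType) (n : nat) (C : 'M[R[i]]_n) (En : 'I_n -> R) :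
  tt_covariant En (had C).
Proof.
move=> t rho _; apply/matrixP => x y.
by rewrite /evol mxE !diag_conjE !mxE; ring.
Qed.

Lemma psd_diag_ge0 (R : realType) (n : nat) (S : 'M[R[i]]_n) x : psd S -> 0 <= S x x.
Proof. by move=> hS; have := hS (delta_mx x 0); rewrite quad_delta. Qed.

Theorem corollary1 (R : realType) (m : nat) (En : 'I_m -> R)
    (sigma : 'M[R[i]]_m) :
  density sigma ->
  let psi : 'cV[R[i]]_m := \col_x sqrtC (sigma x x) in
  exists E : 'M[R[i]]_m -> 'M[R[i]]_m,
    channel E /\ tt_covariant En E /\ E (ketbra psi) = sigma.
Proof.
move=> [hS htr] psi.
have [W hW] := psd_decomp hS.
pose p x := sigma x x.
have hp : forall x, 0 <= p x by move=> x; apply: psd_diag_ge0.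
pose sq x := sqrtC (p x).
have sqc : forall x, (sq x)^* = sq x by move=> x; rewrite geC0_conj // sqrtC_ge0.
have sqsq : forall x, sq x * sq x = p x by move=> x; rewrite -expr2 sqrtCK.
have sigE : forall x y, sigma x y = \sum_k (W k x)^* * W k y.
  by move=> x y; rewrite hW !mxE; apply: eq_bigr => k _; rewrite !mxE.
have W0 : forall x, p x = 0 -> forall k, W k x = 0.
  move=> x px0 k; apply/eqP; rewrite -mul_conjC_eq0; apply/eqP.
  rewrite mulrC; move: k isT; apply: psumr_eq0P.
    by move=> k _; rewrite mulrC mul_conjC_ge0.
  by rewrite -sigE.
have sig0 : forall x y, p x = 0 \/ p y = 0 -> sigma x y = 0.
  move=> x y [h|h]; rewrite sigE; apply: big1 => k _; rewrite (W0 _ h) ?conjC0 ?mul0r ?mulr0 //.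
pose G1 : 'M[R[i]]_m := \matrix_(k, x) (if p x == 0 then 0 else W k x / sq x).
pose G2 : 'M[R[i]]_m := \matrix_(k, x) ((p x == 0) && (k == x))%:R.
pose G := col_mx G1 G2.
pose C := adj G *m G.
have CE : forall x y, C x y = \sum_r (G r x)^* * G r y.
  by move=> x y; rewrite !mxE; apply: eq_bigr => r _; rewrite !mxE.
have CE2 : forall x y, C x y = \sum_k (G1 k x)^* * G1 k y + \sum_k (G2 k x)^* * G2 k y.
  by move=> x y; rewrite CE big_split_ord /=; congr (_ + _); apply: eq_bigr => k _;
    rewrite ?col_mxEu ?col_mxEd.
have Cxx : forall x, C x x = 1.
  move=> x; rewrite CE2; case: (eqVneq (p x) 0) => px.
    rewrite big1 ?add0r; last by move=> k _; rewrite !mxE px eqxx conjC0 mul0r.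
    rewrite (bigD1 x) //= big1 ?addr0; last first.
      by move=> k ne; rewrite !mxE px eqxx (negbTE ne) conjC0 mul0r.
    by rewrite !mxE px !eqxx /= conjC1 mulr1.
  rewrite [X in _ + X]big1 ?addr0; last first.
    by move=> k _; rewrite !mxE (negbTE px) /= conjC0 mul0r.
  have -> : \sum_k (G1 k x)^* * G1 k x = (\sum_k (W k x)^* * W k x) / (sq x * sq x).
    rewrite mulr_suml; apply: eq_bigr => k _.
    rewrite !mxE (negbTE px) rmorphM fmorphV /= sqc invfM; ring.
  by rewrite -sigE sqsq divff.
have Cxy : forall x y, C x y * (sq x * sq y) = sigma x y.
  move=> x y; case: (eqVneq (p x) 0) => px.
    by rewrite sig0 ?px; [rewrite /sq px sqrtC0 mul0r mulr0 | left].
  case: (eqVneq (p y) 0) => py.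
    by rewrite sig0 ?py; [rewrite /sq py sqrtC0 mulr0 mulr0 | right].
  have sx : sq x != 0 by rewrite sqrtC_eq0.
  have sy : sq y != 0 by rewrite sqrtC_eq0.
  rewrite CE2 [X in _ + X]big1 ?addr0; last first.
    by move=> k _; rewrite !mxE (negbTE px) /= conjC0 mul0r.
  rewrite sigE mulr_suml; apply: eq_bigr => k _.
  rewrite !mxE (negbTE px) (negbTE py) rmorphM fmorphV /= sqc.
  by field; rewrite sx sy.
clearbody C.
exists (had C); split; [split; [exact: had_linear | split]|split].
- exact: (had_cp CE).
- exact: had_tp.
- exact: had_cov.
apply/matrixP => x y; rewrite !mxE big_ord1 !mxE sqc.
exact: Cxy.
Qed.
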